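(* Let $L$ be a $\kappa$-frame and $a\in L$. Then $\mathfrak{D}_L\vee\nabla_a=\partial_{(\downarrow a)^{**}}$ in $\mathbb{C}L$.
   Context: $\kappa$ is a fixed regular cardinal; a $\kappa$-frame is a bounded distributive lattice having joins of all subsets of cardinality $<\kappa$ and satisfying the frame distributive law for such joins. A $\kappa$-ideal is a downset in which every subset of cardinality $<\kappa$ has an upper bound; $\mathfrak{H}_\kappa L$ is the frame of $\kappa$-ideals under inclusion, $\downarrow a=\{x\mid x\le a\}$, and $J^*$ denotes the pseudocomplement in $\mathfrak{H}_\kappa L$ (the largest $\kappa$-ideal $K$ with $K\cap J=\{0\}$), so $(\downarrow a)^{**}=((\downarrow a)^* )^*$. A congruence is an equivalence relation that is a sub-$\kappa$-frame of $L\times L$; $\mathbb{C}L$ is the frame of congruences under inclusion. $\nabla_a=\{(x,y)\mid x\vee a=y\vee a\}$; $\mathfrak{D}_L=\{(b,c)\mid\forall x\in L:\ b\wedge x=0\iff c\wedge x=0\}$; for a $\kappa$-ideal $I$, $\partial_I=\{(b,c)\mid\forall x\in L:\ b\wedge x\in I\iff c\wedge x\in I\}$. *)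

(* Defs.v *)
From Stdlib Require Import Classical.

Set Implicit Arguments.

(** |A| < |K| : there is no injection of K into A. (With classical logic and
    choice this is exactly the strict cardinal inequality.) *)
Definition card_lt {T : Type} (A : T -> Prop) (K : Type) : Prop :=
  ~ exists f : K -> T, (forall k1 k2, f k1 = f k2 -> k1 = k2) /\ forall k, A (f k).

(** A regular cardinal kappa, represented by a type of cardinality kappa:
    infinite, and a union of fewer than kappa sets, each of size < kappa,
    has size < kappa. *)
Record regular_cardinal := {
  rc_type :> Type;
  rc_infinite : exists f : nat -> rc_type, forall m n, f m = f n -> m = n;
  rc_regular : forall (I T : Type) (F : I -> T -> Prop),
      card_lt (fun _ : I => True) rc_type ->
      (forall i, card_lt (F i) rc_type) ->
      card_lt (fun x => exists i, F i x) rc_type }.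

Definition small (k : regular_cardinal) {T : Type} (A : T -> Prop) : Prop :=
  card_lt A (rc_type k).

(** A kappa-frame: a partial order with binary meets, a top, and joins
    [kf_sup S] of all subsets S of cardinality < kappa (the value of
    [kf_sup] on larger subsets is irrelevant), satisfying the frame law. *)
Record kappa_frame (k : regular_cardinal) := {
  kf_car :> Type;
  kf_le : kf_car -> kf_car -> Prop;
  kf_meet : kf_car -> kf_car -> kf_car;
  kf_top : kf_car;
  kf_sup : (kf_car -> Prop) -> kf_car;
  kf_refl : forall a, kf_le a a;
  kf_trans : forall a b c, kf_le a b -> kf_le b c -> kf_le a c;
  kf_antisym : forall a b, kf_le a b -> kf_le b a -> a = b;
  kf_meet_glb : forall a b c, kf_le c (kf_meet a b) <-> (kf_le c a /\ kf_le c b);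
  kf_top_max : forall a, kf_le a kf_top;
  kf_sup_ub : forall S, small k S -> forall s, S s -> kf_le s (kf_sup S);
  kf_sup_least : forall S, small k S ->
      forall u, (forall s, S s -> kf_le s u) -> kf_le (kf_sup S) u;
  kf_frame : forall a S, small k S ->
      kf_meet a (kf_sup S) = kf_sup (fun x => exists s, S s /\ x = kf_meet a s) }.

Section KFrame.
Variables (k : regular_cardinal) (L : kappa_frame k).

Definition kbot : L := kf_sup L (fun _ => False).
Definition kjoin (a b : L) : L := kf_sup L (fun x => x = a \/ x = b).

Definition kideal (I : L -> Prop) : Prop :=
  (forall x y, kf_le L x y -> I y -> I x) /\
  (forall S : L -> Prop, small k S -> (forall s, S s -> I s) ->
     exists u, I u /\ forall s, S s -> kf_le L s u).

Definition downset (a : L) : L -> Prop := fun x => kf_le L x a.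

(** J^* : the largest kappa-ideal K with K ∩ J = {0}, i.e. the union of
    all such kappa-ideals. *)
Definition pcomp (J : L -> Prop) : L -> Prop :=
  fun x => exists K, kideal K /\ (forall y, K y -> J y -> y = kbot) /\ K x.

(** congruences: equivalence relations that are sub-kappa-frames of L×L *)
Definition congruence (C : L -> L -> Prop) : Prop :=
  (forall x, C x x) /\
  (forall x y, C x y -> C y x) /\
  (forall x y z, C x y -> C y z -> C x z) /\
  C (kf_top L) (kf_top L) /\
  (forall x y x' y', C x y -> C x' y' -> C (kf_meet L x x') (kf_meet L y y')) /\
  (forall S : L * L -> Prop, small k S -> (forall p, S p -> C (fst p) (snd p)) ->
     C (kf_sup L (fun x => exists p, S p /\ x = fst p))
       (kf_sup L (fun y => exists p, S p /\ y = snd p))).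

(** binary join in the frame CL of congruences (meets are intersections) *)
Definition cong_join (R S : L -> L -> Prop) : L -> L -> Prop :=
  fun x y => forall C, congruence C ->
    (forall u v, R u v -> C u v) -> (forall u v, S u v -> C u v) -> C x y.

Definition nabla (a : L) : L -> L -> Prop :=
  fun x y => kjoin x a = kjoin y a.

Definition frakD : L -> L -> Prop :=
  fun b c => forall x, kf_meet L b x = kbot <-> kf_meet L c x = kbot.

Definition partialI (I : L -> Prop) : L -> L -> Prop :=
  fun b c => forall x, I (kf_meet L b x) <-> I (kf_meet L c x).

End KFrame.

(* Main.v *)
Require Import Defs.
From Stdlib Require Import Setoid ClassicalEpsilon.

Section A.
Variable k : regular_cardinal.
Variable L : kappa_frame k.
Notation le := (kf_le L).
Notation m := (kf_meet L).
Notation bot := (kbot L).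

Lemma m_l a b : le (m a b) a.
Proof. exact (proj1 (proj1 (kf_meet_glb L a b (m a b)) (kf_refl L _))). Qed.
Lemma m_r a b : le (m a b) b.
Proof. exact (proj2 (proj1 (kf_meet_glb L a b (m a b)) (kf_refl L _))). Qed.
Lemma m_glb a b c : le c a -> le c b -> le c (m a b).
Proof. intros; apply (kf_meet_glb L); auto. Qed.
Lemma m_comm a b : m a b = m b a.
Proof. apply kf_antisym; apply m_glb; (apply m_r || apply m_l). Qed.
Lemma m_assoc a b c : m (m a b) c = m a (m b c).
Proof.
  apply kf_antisym; repeat apply m_glb;
  eauto using kf_trans, m_l, m_r.
Qed.
Lemma m_mono a b c d : le a b -> le c d -> le (m a c) (m b d).
Proof. intros; apply m_glb; eauto using kf_trans, m_l, m_r. Qed.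
Lemma m_idem a : m a a = a.
Proof. apply kf_antisym; [apply m_l| apply m_glb; apply kf_refl]. Qed.
Lemma le_m a b : le a b -> m b a = a.
Proof. intros; apply kf_antisym; [apply m_r| apply m_glb; auto; apply kf_refl]. Qed.
Lemma m_swap a b c : m a (m b c) = m b (m a c).
Proof. rewrite <- !m_assoc, (m_comm a b); reflexivity. Qed.

Lemma small_empty {T : Type} : small k (fun _ : T => False).
Proof.
  intros [g [_ H]]. destruct (rc_infinite k) as [f _]. exact (H (f 0)).
Qed.

Lemma small_pair {T : Type} (a b : T) : small k (fun x => x = a \/ x = b).
Proof.
  intros [g [ginj H]]. destruct (rc_infinite k) as [f finj].
  destruct (H (f 0)) as [e0|e0]; destruct (H (f 1)) as [e1|e1];
  destruct (H (f 2)) as [e2|e2];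
  first
  [ assert (E : f 0 = f 1) by (apply ginj; congruence); apply finj in E; discriminate
  | assert (E : f 0 = f 2) by (apply ginj; congruence); apply finj in E; discriminate
  | assert (E : f 1 = f 2) by (apply ginj; congruence); apply finj in E; discriminate ].
Qed.

Lemma small_image {T U : Type} (S : T -> Prop) (f : T -> U) :
  small k S -> small k (fun u => exists t, S t /\ u = f t).
Proof.
  unfold small, card_lt. intros HS [g [ginj gH]]. apply HS.
  exists (fun kk => proj1_sig (constructive_indefinite_description _ (gH kk))).
  split.
  - intros k1 k2 E. apply ginj.
    destruct (constructive_indefinite_description _ (gH k1)) as [t1 [S1 E1]].
    destruct (constructive_indefinite_description _ (gH k2)) as [t2 [S2 E2]].
    simpl in E. subst t2. rewrite E1, E2. reflexivity.
  - intro kk. destruct (constructive_indefinite_description _ (gH kk)) as [t [St Et]].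
    exact St.
Qed.

Lemma bot_le x : le bot x.
Proof. unfold kbot. apply kf_sup_least; [apply small_empty| intros s []]. Qed.
Lemma le_bot x : le x bot -> x = bot.
Proof. intros; apply kf_antisym; auto; apply bot_le. Qed.
Lemma m_bot_le x y z : le x y -> m y z = bot -> m x z = bot.
Proof.
  intros H1 H2. apply le_bot. rewrite <- H2. apply m_mono; auto; apply kf_refl.
Qed.

Lemma sup_bot T : small k T -> (forall t, T t -> t = bot) -> kf_sup L T = bot.
Proof.
  intros HT H. apply le_bot, kf_sup_least; auto.
  intros s Hs; rewrite (H s Hs); apply kf_refl.
Qed.

Lemma sup_meet_bot T x : small k T ->
  (m (kf_sup L T) x = bot <-> forall t, T t -> m t x = bot).
Proof.
  intros HT. split.
  - intros H t Ht. apply (m_bot_le t (kf_sup L T)); auto. apply kf_sup_ub; auto.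
  - intros H. rewrite m_comm, kf_frame by auto. apply sup_bot.
    + apply small_image; auto.
    + intros t [s [Hs ->]]. rewrite m_comm; auto.
Qed.

Lemma j_l x y : le x (kjoin L x y).
Proof. unfold kjoin. apply kf_sup_ub; [apply small_pair| left; reflexivity]. Qed.
Lemma j_r x y : le y (kjoin L x y).
Proof. unfold kjoin. apply kf_sup_ub; [apply small_pair| right; reflexivity]. Qed.
Lemma j_least x y u : le x u -> le y u -> le (kjoin L x y) u.
Proof.
  intros; unfold kjoin; apply kf_sup_least; [apply small_pair|].
  intros s [-> | ->]; auto.
Qed.

Lemma meet_join_bot x b c : m x b = bot -> m x c = bot -> m x (kjoin L b c) = bot.
Proof.
  intros H1 H2. unfold kjoin. rewrite kf_frame by apply small_pair.
  apply sup_bot; [apply small_image, small_pair|].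
  intros t [s [[-> | ->] ->]]; auto.
Qed.

Definition R (a b c : L) : Prop :=
  forall x, m x a = bot -> (m b x = bot <-> m c x = bot).

Lemma R_cong a : congruence L (R a).
Proof.
  unfold congruence. split; [|split;[|split;[|split;[|split]]]].
  - intros x y Hy; tauto.
  - intros x y H z Hz; specialize (H z Hz); tauto.
  - intros x y z H1 H2 w Hw; specialize (H1 w Hw); specialize (H2 w Hw); tauto.
  - intros x Hx; tauto.
  - intros b c b' c' H1 H2 x Hx. rewrite !m_assoc.
    assert (h1 : m (m b' x) a = bot) by (apply (m_bot_le _ x); auto; apply m_r).
    rewrite (H1 (m b' x) h1).
    rewrite (m_swap c b' x), (m_swap c c' x).
    assert (h2 : m (m c x) a = bot) by (apply (m_bot_le _ x); auto; apply m_r).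
    apply H2; auto.
  - intros S HS H x Hx.
    rewrite !sup_meet_bot by (apply small_image; auto).
    split; intros G t [p [Sp ->]].
    + apply (proj1 (H p Sp x Hx)). apply G. eauto.
    + apply (proj2 (H p Sp x Hx)). apply G. eauto.
Qed.

Lemma D_R a b c : frakD L b c -> R a b c.
Proof. intros H x _; apply H. Qed.

Lemma nabla_half a b c x : kjoin L b a = kjoin L c a -> m x a = bot ->
  m b x = bot -> m c x = bot.
Proof.
  intros E Hx Hb. apply (m_bot_le c (kjoin L c a)); [apply j_l|].
  rewrite <- E, m_comm. apply meet_join_bot; [rewrite m_comm; auto| ].
  rewrite m_comm; auto. rewrite m_comm; auto.
Qed.

Lemma nabla_R a b c : nabla L a b c -> R a b c.
Proof.
  intros H x Hx. split; [apply (nabla_half a b c)|apply (nabla_half a c b)]; auto.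
Qed.

Lemma R_meet a b c d : R a b c -> R a (m d b) (m d c).
Proof.
  intros H x Hx. rewrite !m_assoc, (m_swap d b x), (m_swap d c x).
  apply H. apply (m_bot_le _ x); auto; apply m_r.
Qed.

Lemma key a (C : L -> L -> Prop) b d : congruence L C ->
  (forall u v, frakD L u v -> C u v) -> (forall u v, nabla L a u v -> C u v) ->
  le d b -> R a b d -> C b d.
Proof.
  intros HC HD HN Hdb HR.
  destruct HC as [Cr [Cs [Ct [_ [Cm _]]]]].
  set (e := kjoin L d a).
  assert (H1 : C b (m b e)).
  { apply HD. intros x; split.
    - intro H. apply (m_bot_le _ b); [apply m_l| exact H].
    - intro H. set (y := m b x).
      assert (Hy : m y a = bot).
      { apply le_bot. rewrite <- H. apply m_glb; [apply m_glb|].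
        - unfold y; eauto using kf_trans, m_l.
        - eapply kf_trans; [apply m_r| apply j_r].
        - unfold y; eauto using kf_trans, m_l, m_r. }
      assert (Hd : m d y = bot).
      { apply le_bot. rewrite <- H. apply m_glb; [apply m_glb|].
        - eapply kf_trans; [apply m_l| exact Hdb].
        - eapply kf_trans; [apply m_l| apply j_l].
        - unfold y; eauto using kf_trans, m_l, m_r. }
      apply (proj2 (HR y Hy)) in Hd. unfold y in Hd.
      rewrite <- m_assoc, m_idem in Hd. exact Hd. }
  assert (H2 : C d e).
  { apply HN. unfold nabla. apply kf_antisym.
    - apply j_least; [eapply kf_trans; [apply j_l| apply j_l] | apply j_r].
    - apply j_least; [apply kf_refl | apply j_r]. }
  assert (H3 : C (m b d) (m b e)) by (apply Cm; auto).
  rewrite le_m in H3 by exact Hdb.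
  eapply Ct; [exact H1| apply Cs; exact H3].
Qed.

Lemma pcomp_down J : forall x y, le x y -> pcomp L J y -> pcomp L J x.
Proof.
  intros x y Hxy [K [[Kd Ku] [Kj Ky]]]. exists K; split; [split|split]; eauto.
Qed.

Lemma pcomp_char J : (forall x y, le x y -> J y -> J x) ->
  forall z, pcomp L J z <-> forall y, J y -> m z y = bot.
Proof.
  intros HJ z. split.
  - intros [K [[Kd _] [Kj Kz]]] y Jy. apply Kj.
    + apply (Kd _ z); auto; apply m_l.
    + apply (HJ _ y); auto; apply m_r.
  - intros H. exists (fun x => forall y, J y -> m x y = bot).
    split; [split|split].
    + intros x x' Hle Hx' y Jy. apply (m_bot_le x x'); auto.
    + intros S HS HSa. exists (kf_sup L S). split.
      * intros y Jy. apply sup_meet_bot; auto.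
      * intros s Hs; apply kf_sup_ub; auto.
    + intros y Hy Jy. rewrite <- (m_idem y). auto.
    + exact H.
Qed.

Lemma pcomp_down_a a y : pcomp L (downset L a) y <-> m y a = bot.
Proof.
  rewrite pcomp_char.
  - split; intros H.
    + apply H. unfold downset; apply kf_refl.
    + intros w Hw. rewrite m_comm. apply (m_bot_le w a); auto.
      rewrite m_comm; auto.
  - intros x y' Hxy Hy; unfold downset in *; eapply kf_trans; eauto.
Qed.

Lemma pp_char a z : pcomp L (pcomp L (downset L a)) z <->
  forall y, m y a = bot -> m z y = bot.
Proof.
  rewrite pcomp_char by (apply pcomp_down).
  split; intros H y Hy; apply H.
  - apply (proj2 (pcomp_down_a a y)); exact Hy.
  - apply (proj1 (pcomp_down_a a y)); exact Hy.
Qed.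

Lemma P_bot a b x : m x a = bot ->
  ((forall w, m w a = bot -> m (m b x) w = bot) <-> m b x = bot).
Proof.
  intros Hx. split.
  - intros H. specialize (H x Hx). rewrite m_assoc, m_idem in H. exact H.
  - intros H w _. apply le_bot. rewrite <- H. apply m_l.
Qed.

Lemma partialI_R a x y :
  partialI L (pcomp L (pcomp L (downset L a))) x y <-> R a x y.
Proof.
  split.
  - intros H z Hz. specialize (H z). rewrite !pp_char in H.
    rewrite <- (P_bot a x z Hz), <- (P_bot a y z Hz). exact H.
  - intros H z. rewrite !pp_char. split; intros G w Hw;
    (assert (h : m (m z w) a = bot) by
       (apply le_bot; rewrite <- Hw; apply m_mono; [apply m_r| apply kf_refl]));
    rewrite m_assoc; [apply (proj1 (H _ h))| apply (proj2 (H _ h))];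
    rewrite <- m_assoc; apply G; auto.
Qed.

End A.

Theorem mainTheorem18 (k : regular_cardinal) (L : kappa_frame k) (a : L) :
  forall x y : L,
    cong_join L (frakD L) (nabla L a) x y <->
    partialI L (pcomp L (pcomp L (downset L a))) x y.
Proof.
  intros x y. split.
  - intro H. apply partialI_R. apply H; [apply R_cong | apply D_R | apply nabla_R].
  - intro H. apply partialI_R in H. intros C HC HD HN.
    pose proof HC as HC'. destruct HC' as (Cr & Cs & Ct & _).
    assert (H1 : C x (kf_meet L x y)).
    { apply (key k L a); auto. apply m_l.
      pose proof (R_meet k L a x y x H) as H'. rewrite m_idem in H'. exact H'. }
    assert (H2 : C y (kf_meet L x y)).
    { apply (key k L a); auto. apply m_r.
      assert (Hs : R k L a y x) by (intros z Hz; specialize (H z Hz); tauto).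
      pose proof (R_meet k L a y x y Hs) as H'. rewrite m_idem, m_comm in H'. exact H'. }
    eapply Ct; [exact H1| apply Cs; exact H2].
Qed.
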